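(* Let $\lambda=(\lambda_1,\dots,\lambda_N)$ be a partition. The map sending a column-strict tableau $\emptyset=\lambda^{(0)}\subset\lambda^{(1)}\subset\dots\subset\lambda^{(N)}=\lambda$ of shape $\lambda$ to the matrix $\theta$ with $\theta_{i,j}=\lambda^{(j)}_i-\lambda^{(j-1)}_i$ for $i<j$ and $\theta_{i,j}=0$ for $i\ge j$ is a bijection from the set of column-strict tableaux of shape $\lambda$ onto $$\mathsf{Pol}_\lambda=\Big\{\theta\in\mathsf M^{(N)}:0\le\theta_{i,j}\le\lambda_i-\lambda_{i+1}-\sum_{k=j+1}^N(\theta_{i,k}-\theta_{i+1,k})\Big\}.$$
   Context: A column-strict tableau of shape $\lambda$ is a sequence of partitions $\emptyset=\lambda^{(0)}\subset\dots\subset\lambda^{(N)}=\lambda$ such that each skew diagram $\lambda^{(k)}-\lambda^{(k-1)}$ is a horizontal strip (i.e. $\lambda^{(k)}_1\ge\lambda^{(k-1)}_1\ge\lambda^{(k)}_2\ge\lambda^{(k-1)}_2\ge\dots$). $\mathsf M^{(N)}$ is the set of $N\times N$ matrices with entries in $\mathbb Z_{\ge0}$ that vanish on and below the diagonal. $\lambda_{N+1}=0$. *)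

(* Defs.v *)
From mathcomp Require Import all_boot all_order all_algebra.
Set Implicit Arguments. Unset Strict Implicit. Unset Printing Implicit Defensive.
Import Order.TTheory GRing.Theory Num.Theory.

(* The paper's lambda_i (1-based) is [part lambda (i-1)]. *)
Definition is_partition (s : seq nat) : bool :=
  sorted geq s && all (fun x => 0 < x) s.

Definition part (s : seq nat) (i : nat) : nat := nth 0 s i.

Definition horizontal_strip (mu nu : seq nat) : Prop :=
  forall i, part mu i <= part nu i /\ part nu i.+1 <= part mu i.

Definition cst (N : nat) (lam : seq nat) (T : seq (seq nat)) : Prop :=
  [/\ size T = N.+1,
      nth [::] T 0 = [::],
      nth [::] T N = lam,
      (forall k, k <= N -> is_partition (nth [::] T k))
      & (forall k, 0 < k <= N -> horizontal_strip (nth [::] T k.-1) (nth [::] T k))].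

(* The map tableau -> matrix (0-based indices i, j < N correspond to the
   paper's i+1, j+1):  theta_{i,j} = lambda^(j+1)_i - lambda^(j)_i for i < j,
   and 0 on and below the diagonal. *)
Definition theta_of (N : nat) (T : seq (seq nat)) : 'M[nat]_N :=
  \matrix_(i < N, j < N)
    (if (i < j)%N then part (nth [::] T j.+1) i - part (nth [::] T j) i else 0%N).

Definition ment (N : nat) (th : 'M[nat]_N) (i j : nat) : nat :=
  match @insub nat (fun k => k < N) 'I_N i, @insub nat (fun k => k < N) 'I_N j with
  | Some i', Some j' => th i' j'
  | _, _ => 0%N
  end.

Definition strict_upper (N : nat) (th : 'M[nat]_N) : Prop :=
  forall i j : 'I_N, (j <= i)%N -> th i j = 0%N.

Local Open Scope ring_scope.

Definition Pol (N : nat) (lam : seq nat) (th : 'M[nat]_N) : Prop :=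
  strict_upper th /\
  forall i j : nat, (i < N)%N -> (j < N)%N -> (i < j)%N ->
    (ment th i j)%:Z <=
      (part lam i)%:Z - (part lam i.+1)%:Z
      - \sum_(j.+1 <= k < N) ((ment th i k)%:Z - (ment th i.+1 k)%:Z).

(* Main.v *)
Require Import Defs.
From mathcomp Require Import all_boot all_order all_algebra zify.
Import Order.TTheory GRing.Theory Num.Theory.
Local Open Scope ring_scope.
Set Implicit Arguments. Unset Strict Implicit.

Lemma mentE N (th : 'M[nat]_N) i j (hi : (i < N)%N) (hj : (j < N)%N) :
  ment th i j = th (Ordinal hi) (Ordinal hj).
Proof. by rewrite /ment (insubT (fun k => (k < N)%N) hi) (insubT (fun k => (k < N)%N) hj). Qed.

Lemma mentO N (th : 'M[nat]_N) (i j : 'I_N) : ment th i j = th i j.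
Proof. by rewrite /ment !valK. Qed.

Lemma sumPosz m n (F : nat -> nat) :
  ((\sum_(m <= k < n) F k)%N)%:Z = (\sum_(m <= k < n) (F k)%:Z)%R.
Proof. by rewrite (big_morph Posz PoszD (erefl _)). Qed.

Lemma part_pos s i : is_partition s -> (i < size s)%N -> (0 < part s i)%N.
Proof. by case/andP=> _ /all_nthP H Hi; apply: H. Qed.

Lemma part_size s t : is_partition s -> (forall i, part s i = part t i) ->
  (size s <= size t)%N.
Proof.
move=> Hs E; rewrite leqNgt; apply/negP => Hlt.
have := part_pos Hs Hlt; rewrite E /part nth_default //.
Qed.

Lemma partition_eq s t : is_partition s -> is_partition t ->
  (forall i, part s i = part t i) -> s = t.
Proof.
move=> Hs Ht E.
have Esz : size s = size t.
  by apply/eqP; rewrite eqn_leq (part_size Hs E) (part_size Ht (fun i => esym (E i))).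
by apply: (eq_from_nth (x0 := 0%N)) Esz _ => i _; apply: E.
Qed.

Fixpoint mkpart (g : nat -> nat) (k : nat) : seq nat :=
  if k is k'.+1 then (if (0 < g 0)%N then g 0 :: mkpart (fun i => g i.+1) k' else [::])
  else [::].

Lemma noninc0 (g : nat -> nat) : (forall i, (g i.+1 <= g i)%N) -> g 0 = 0%N ->
  forall i, g i = 0%N.
Proof.
move=> Hg H0; elim=> // i IH; have := Hg i; rewrite IH; lia.
Qed.

Lemma mkpartP k : forall g, (forall i, (g i.+1 <= g i)%N) -> g k = 0%N ->
  is_partition (mkpart g k) /\ forall i, part (mkpart g k) i = g i.
Proof.
elim: k => [|k IH] g Hg Hk /=.
  by split=> // i; rewrite /part nth_nil (noninc0 Hg Hk).
case: ifP => Hg0; last first.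
  have H0 : g 0 = 0%N by move/negbT: Hg0; rewrite -leqNgt leqn0 => /eqP.
  by split=> // i; rewrite /part nth_nil (noninc0 Hg H0).
have [Hp Hpart] := IH (fun i => g i.+1) (fun i => Hg i.+1) Hk.
split; last by case.
move: Hp; rewrite /is_partition /= Hg0 => /andP[Hs Ha].
apply/andP; split=> //.
case E: (mkpart _ _) Hs Hpart => [|x s'] //= -> Hpart.
by rewrite andbT; have := Hpart 0%N; rewrite /part /= => ->; apply: Hg.
Qed.

Section CstFacts.
Variables (N : nat) (lam : seq nat) (T : seq (seq nat)).
Hypothesis HT : cst N lam T.
Let P k i := part (nth [::] T k) i.

Lemma P_mono k i : (k < N)%N -> (P k i <= P k.+1 i)%N.
Proof. case: HT => _ _ _ _ H Hk; have [] := H k.+1 (Hk) i => //. Qed.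

Lemma P_strip k i : (k < N)%N -> (P k.+1 i.+1 <= P k i)%N.
Proof. case: HT => _ _ _ _ H Hk; have [] := H k.+1 (Hk) i => //. Qed.

Lemma P_monoL k l i : (k <= l)%N -> (l <= N)%N -> (P k i <= P l i)%N.
Proof.
move=> Hkl; elim: l Hkl => [|l IH]; first by rewrite leqn0 => /eqP ->.
rewrite leq_eqVlt => /orP[/eqP <- //|Hkl] HlN.
apply: leq_trans (IH Hkl (ltnW HlN)) (P_mono _ HlN).
Qed.

Lemma P_zero k i : (k <= N)%N -> (k <= i)%N -> P k i = 0%N.
Proof.
elim: k i => [|k IH] i HkN Hki.
  by case: HT => _ H0 _ _ _; rewrite /P H0 /part nth_nil.
case: i Hki => // i Hki; have := P_strip i (HkN).
by rewrite (IH i (ltnW HkN) Hki); lia.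
Qed.

Lemma P_N i : P N i = part lam i.
Proof. by case: HT => _ _ E; rewrite /P E. Qed.

Lemma ment_theta i k : (i < N)%N -> (k < N)%N ->
  ment (theta_of N T) i k = if (i < k)%N then (P k.+1 i - P k i)%N else 0%N.
Proof. by move=> hi hk; rewrite mentE mxE. Qed.

Lemma tele i j : (j <= N)%N -> (i < j)%N ->
  (\sum_(j <= k < N) ment (theta_of N T) i k)%N = (P N i - P j i)%N.
Proof.
move=> HjN Hij.
rewrite (@eq_big_nat _ _ _ _ _ _ (fun k => P k.+1 i - P k i)%N); last first.
  move=> k /andP[Hjk HkN]; rewrite ment_theta //; last by lia.
  by rewrite (leq_trans Hij Hjk).
apply: (telescope_sumn_in (f := fun k => P k i)) => // k /andP[_ Hk].
exact: P_mono.
Qed.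

End CstFacts.

Theorem lemma2p1 (N : nat) (lam : seq nat) :
  is_partition lam -> (size lam <= N)%N ->
  [/\ (forall T, cst N lam T -> Pol lam (theta_of N T)),
      (forall T1 T2, cst N lam T1 -> cst N lam T2 ->
          theta_of N T1 = theta_of N T2 -> T1 = T2)
    & (forall th : 'M[nat]_N, Pol lam th ->
          exists2 T, cst N lam T & theta_of N T = th)].
Proof.
move=> Hlam Hsz; split.
- move=> T HT; split.
    by move=> i j Hji; rewrite mxE ltnNge Hji.
  move=> i j Hi Hj Hij.
  rewrite sumrB -!sumPosz.
  have e1 := @tele N lam T HT i j.+1 Hj (leqW Hij).
  have e2 := @tele N lam T HT i.+1 j.+1 Hj Hij.
  rewrite e1 e2.
  rewrite ment_theta // Hij.
  have h1 := P_strip HT i Hj.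
  have h2 := P_mono HT i Hj.
  have h3 := P_monoL HT i (leqnSn j) (Hj).
  have h4 := P_monoL HT i (Hj) (leqnn N).
  have h5 := P_monoL HT i.+1 (Hj) (leqnn N).
  rewrite (P_N HT) in h4; rewrite (P_N HT) in h5.
  rewrite !(P_N HT); lia.
- move=> T1 T2 H1 H2 Hth.
  have Hp : forall d k, (k + d)%N = N -> forall i,
      part (nth [::] T1 k) i = part (nth [::] T2 k) i.
    elim=> [|d IH] k Hkd i.
      by rewrite addn0 in Hkd; rewrite Hkd (P_N H1) (P_N H2).
    have HkN : (k < N)%N by lia.
    have IH1 := IH k.+1 ltac:(lia) i.
    case: (ltnP i k) => Hik; last first.
      by rewrite (P_zero H1) ?(P_zero H2) // ltnW.
    have := congr1 (fun M : 'M[nat]_N => M (Ordinal (ltn_trans Hik HkN)) (Ordinal HkN)) Hth.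
    rewrite /= !mxE /= Hik.
    have := P_mono H1 i HkN; have := P_mono H2 i HkN.
    lia.
  apply: (eq_from_nth (x0 := [::])).
    by case: H1 => ->; case: H2 => ->.
  case: H1 => Hs1 _ _ Hpart1 _ k Hk; rewrite Hs1 ltnS in Hk.
  case: H2 => _ _ _ Hpart2 _.
  apply: partition_eq; [exact: Hpart1|exact: Hpart2|].
  by apply: (Hp (N - k)%N); lia.
- move=> th [Hsu Hpol].
  pose S i k := (\sum_(k <= m < N) ment th i m)%N.
  have Sstep : forall i j, (j < N)%N -> S i j = (ment th i j + S i j.+1)%N.
    by move=> i j Hj; rewrite /S big_ltn.
  have Skey : forall i j, (i < j)%N -> (j < N)%N ->
      (part lam i.+1)%:Z - (S i.+1 j.+1)%:Z <= (part lam i)%:Z - (S i j)%:Z.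
    move=> i j Hij Hj; have := Hpol i j (ltn_trans Hij Hj) Hj Hij.
    rewrite sumrB -!sumPosz -/(S i j.+1) -/(S i.+1 j.+1) (Sstep i j Hj).
    lia.
  have Snn : forall d i j, (j + d)%N = N -> (i < j)%N -> (S i j <= part lam i)%N.
    elim=> [|d IH] i j Hjd Hij.
      by rewrite addn0 in Hjd; rewrite /S Hjd big_geq.
    have := IH i.+1 j.+1 ltac:(lia) ltac:(lia).
    have := Skey i j Hij ltac:(lia).
    lia.
  have Snn' : forall i j, (i < j)%N -> (j <= N)%N -> (S i j <= part lam i)%N.
    by move=> i j Hij HjN; apply: (Snn (N - j)%N); lia.
  pose f k i := if (i < k)%N then (part lam i - S i k)%N else 0%N.
  have fdec : forall k, (k <= N)%N -> forall i, (f k i.+1 <= f k i)%N.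
    move=> k HkN i; rewrite /f; case: ltnP => H1; last exact: leq0n.
    case: k HkN H1 => // k HkN H1.
    have -> : (i < k.+1)%N by lia.
    have := Skey i k ltac:(lia) HkN.
    have := Sstep i k HkN.
    have := Snn' i k.+1 ltac:(lia) HkN.
    have := Snn' i.+1 k.+1 ltac:(lia) HkN.
    lia.
  have fkk : forall k, f k k = 0%N by move=> k; rewrite /f ltnn.
  pose T := mkseq (fun k => mkpart (f k) k) N.+1.
  have nthT : forall k, (k <= N)%N -> nth [::] T k = mkpart (f k) k.
    by move=> k HkN; rewrite nth_mkseq.
  have partT : forall k i, (k <= N)%N -> part (nth [::] T k) i = f k i.
    by move=> k i HkN; rewrite nthT //; apply: (mkpartP (fdec k HkN) (fkk k)).2.
  have isP : forall k, (k <= N)%N -> is_partition (nth [::] T k).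
    by move=> k HkN; rewrite nthT //; apply: (mkpartP (fdec k HkN) (fkk k)).1.
  exists T.
    split.
    - by rewrite size_mkseq.
    - by rewrite nthT.
    - apply: partition_eq => //; first exact: isP.
      move=> i; rewrite partT // /f /S big_geq //.
      case: ltnP => Hi; first by rewrite subn0.
      by rewrite /part nth_default //; apply: leq_trans Hsz Hi.
    - exact: isP.
    - move=> k /andP[Hk0 HkN].
      case: k Hk0 HkN => // k _ HkN.
      change (horizontal_strip (nth [::] T k) (nth [::] T k.+1)) => i.
      rewrite !partT //; last exact: ltnW.
      rewrite /f; split.
        case: (ltnP i k) => H; last exact: leq0n.
        have -> : (i < k.+1)%N by lia.
        have := Sstep i k HkN; lia.
      case: (ltnP i k) => H; last by rewrite ltnS ltnNge H.
      rewrite ltnS H.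
      have := Skey i k H HkN.
      have := Snn' i k H (ltnW HkN).
      have := Snn' i.+1 k.+1 ltac:(lia) HkN.
      lia.
  apply/matrixP => i j; rewrite mxE.
  case: ifP => Hij; last by rewrite Hsu // leqNgt Hij.
  rewrite !partT //; last exact: ltnW.
  rewrite /f Hij.
  have -> : (i < j.+1)%N by lia.
  have := Sstep i j (ltn_ord j); rewrite mentO.
  have := Snn' i j Hij (ltnW (ltn_ord j)).
  lia.
Qed.
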